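(* For every integer $n\geq 1$, the polynomial $L_n(q)=\sum_{s=0}^{n} L_{n,s}\,q^s$ is unimodal; that is, there is an index $m$ with $L_{n,0}\leq L_{n,1}\leq\cdots\leq L_{n,m}\geq L_{n,m+1}\geq\cdots\geq L_{n,n}$.
   Context: A linear chord diagram with $n$ chords is a partition of $[2n]=\{1,2,\dots,2n\}$ into $n$ blocks of size two, called chords (equivalently, a perfect matching of $[2n]$). For a chord $\{a,b\}$ with $a<b$, its length is $b-a$. A short chord is a chord of length one, i.e. a chord of the form $\{i,i+1\}$. For $0\le s\le n$, $L_{n,s}$ denotes the number of linear chord diagrams with $n$ chords having exactly $s$ short chords. *)

(* Defs.v *)
From mathcomp Require Import all_boot.
Set Implicit Arguments. Unset Strict Implicit. Unset Printing Implicit Defensive.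

(* Points of [2n] are represented by 'I_(2*n) = {0,...,2n-1} (a shift by one,
   which preserves chord lengths). A linear chord diagram is a partition of
   [2n] into blocks of size two. *)
Definition chord_diagram (n : nat) (P : {set {set 'I_(2 * n)}}) : bool :=
  partition P [set: 'I_(2 * n)] && [forall B in P, #|B| == 2].

Definition short_chord (n : nat) (B : {set 'I_(2 * n)}) : bool :=
  [exists i : 'I_(2 * n), exists j : 'I_(2 * n),
     (nat_of_ord j == (nat_of_ord i).+1) && (B == [set i; j])].

Definition num_short (n : nat) (P : {set {set 'I_(2 * n)}}) : nat :=
  #|[set B in P | short_chord B]|.

Definition L (n s : nat) : nat :=
  #|[set P : {set {set 'I_(2 * n)}} | chord_diagram P && (num_short P == s)]|.

(* Main.v *)
Require Import Defs.
From Stdlib Require Import ZArith Lia.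
From mathcomp Require Import all_boot zify.
Set Implicit Arguments. Unset Strict Implicit. Unset Printing Implicit Defensive.

Definition hh (j y : nat) := if y < j then y.+1 else y.+2.
Definition gg (j x : nat) := if x <= j then x.-1 else x - 2.
Definition insv (F : nat -> nat) (j x : nat) :=
  if x == 0 then j.+1 else if x == j.+1 then 0 else hh j (F (gg j x)).
Definition delF (G : nat -> nat) (y : nat) :=
  gg (G 0).-1 (G (hh (G 0).-1 y)).
Definition NI (N : nat) (F : nat -> nat) :=
  forall y, y < N -> [/\ F y < N, F (F y) = y & F y <> y].

Ltac casif := repeat match goal with |- context [if ?b then _ else _] => case: ifP end.

Lemma gg_hh j y : gg j (hh j y) = y.
Proof. rewrite /gg /hh; casif; lia. Qed.
Lemma hh_gg j x : x != 0 -> x != j.+1 -> hh j (gg j x) = x.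
Proof. rewrite /gg /hh; casif; lia. Qed.
Lemma hh_neq0 j y : (hh j y == 0) = false.
Proof. rewrite /hh; casif; lia. Qed.
Lemma hh_neqp j y : (hh j y == j.+1) = false.
Proof. rewrite /hh; casif; lia. Qed.
Lemma hh_lt j y N : y < N -> hh j y < N.+2.
Proof. rewrite /hh; casif; lia. Qed.
Lemma gg_lt j x N : j <= N -> x < N.+2 -> x != 0 -> x != j.+1 -> gg j x < N.
Proof. rewrite /gg; casif; lia. Qed.

Lemma insv_NI N F j : NI N F -> j <= N -> NI N.+2 (insv F j).
Proof.
move=> HF hj x hx; rewrite /insv.
case: eqP => [->|x0].
  rewrite eqxx /=; split; [lia | done | lia].
case: eqP => [->|xp].
  by rewrite eqxx; split; [lia|done|lia].
have hy : gg j x < N by apply: gg_lt => //; apply/eqP.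
have [h1 h2 h3] := HF _ hy.
rewrite hh_neq0 hh_neqp gg_hh h2 hh_gg; try by apply/eqP.
split => //; first exact: hh_lt.
move=> e; apply: h3; by rewrite -(gg_hh j (F _)) e.
Qed.

Lemma del_NI N G : NI N.+2 G -> (G 0).-1 <= N /\ NI N (delF G).
Proof.
move=> HG; have [a1 a2 a3] := HG 0 (ltac:(lia)).
split; first lia.
set j := (G 0).-1.
have Gj : G 0 = j.+1 by rewrite /j; lia.
move=> y hy; rewrite /delF -/j.
set x := hh j y.
have hx : x < N.+2 by exact: hh_lt.
have x0 : x != 0 by rewrite /x hh_neq0.
have xp : x != j.+1 by rewrite /x hh_neqp.
have [b1 b2 b3] := HG x hx.
have Gx0 : G x != 0.
  apply/eqP => e; move/eqP: xp; apply; by rewrite -b2 e.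
have Gxp : G x != j.+1.
  apply/eqP => e; move/eqP: x0; apply; by rewrite -b2 e -Gj a2.
split.
- apply: gg_lt => //; lia.
- rewrite hh_gg // b2 /x gg_hh //.
- move=> e; apply: b3; by rewrite -(hh_gg Gx0 Gxp) e.
Qed.

Lemma insv_del N G : NI N.+2 G -> forall x, x < N.+2 ->
  insv (delF G) (G 0).-1 x = G x.
Proof.
move=> HG x hx; have [a1 a2 a3] := HG 0 (ltac:(lia)).
set j := (G 0).-1.
have Gj : G 0 = j.+1 by rewrite /j; lia.
rewrite /insv /delF -/j.
case: eqP => [->|x0]; first by rewrite Gj.
case: eqP => [->|xp]; first by rewrite -Gj a2.
have [b1 b2 b3] := HG x hx.
have Gx0 : G x != 0.
  apply/eqP => e; apply: xp; by rewrite -b2 e Gj.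
have Gxp : G x != j.+1.
  apply/eqP => e; apply: x0; by rewrite -b2 e -Gj a2.
rewrite (@hh_gg j x); try by apply/eqP.
by rewrite hh_gg.
Qed.

Lemma del_insv N F j : j <= N ->
  (insv F j 0).-1 = j /\ forall y, delF (insv F j) y = F y.
Proof.
move=> hj; have e0 : insv F j 0 = j.+1 by [].
split; first by rewrite e0.
move=> y; rewrite /delF e0 /= /insv hh_neq0 hh_neqp.
by rewrite !gg_hh.
Qed.

Definition cntS N (F : nat -> nat) := count (fun x => F x == x.+1) (iota 0 N).

Lemma cntS_ins N F j : NI N F -> j <= N ->
  cntS N.+2 (insv F j) = cntS N F + (j == 0) - ((0 < j) && (F j.-1 == j)).
Proof.
move=> HF hj.
have E1 : iota 0 N.+2 = 0 :: iota 1 j ++ j.+1 :: iota (2 + j) (N - j).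
  have -> : N.+2 = (j + (N - j).+1).+1 by lia.
  rewrite /= iotaD /=; congr (_ :: (_ ++ _ :: iota _ _)); lia.
have E2 : iota 0 N = iota 0 j ++ iota j (N - j).
  by rewrite -iotaD; congr iota; lia.
rewrite /cntS E1 E2 /= count_cat /= count_cat.
rewrite (_ : iota 1 j = map (addn 1) (iota 0 j)); last by rewrite -iotaDl.
rewrite (_ : iota (2 + j) (N - j) = map (addn 2) (iota j (N - j))); last by rewrite -iotaDl.
rewrite !count_map.
rewrite (@eq_in_count _ _ (fun y => (F y == y.+1) && (y.+1 < j)) (iota 0 j)); last first.
{ move=> y; rewrite mem_iota => /andP[_ hy] /=.
  have [c1 c2 c3] := HF y (ltac:(lia)).
  rewrite /insv /gg /hh; casif; try lia.
  all: rewrite ?add1n /=; move=> *; lia. }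
rewrite (@eq_in_count _ _ (fun y => (F y == y.+1)) (iota j (N - j))); last first.
{ move=> y; rewrite mem_iota => /andP[hy1 hy] /=.
  have [c1 c2 c3] := HF y (ltac:(lia)).
  rewrite /insv /gg /hh; casif; try lia.
  all: rewrite ?add2n (_ : y.+2 - 2 = y); try lia; move=> *; lia. }
have -> : (insv F j 0 == 1) = (j == 0) by rewrite /insv /=.
have -> : (insv F j j.+1 == j.+2) = false by rewrite /insv /= eqxx; case: eqP.
case: j hj E1 E2 => [|j] hj _ _; first by rewrite /=; lia.
rewrite (_ : iota 0 j.+1 = iota 0 j ++ [:: j]); last by rewrite -addn1 iotaD.
rewrite !count_cat /= add0n.
rewrite (@eq_in_count _ (fun y => (F y == y.+1) && (y.+1 < j.+1)) (fun y => (F y == y.+1)) (iota 0 j)); last first.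
  move=> y; rewrite mem_iota => /andP[_ hy] /=; case: eqP => //=; lia.
rewrite ltnn andbF; case: eqP => /= _; lia.
Qed.
Lemma card_ord_count N (p : nat -> bool) : #|[set x : 'I_N | p x]| = count p (iota 0 N).
Proof.
rewrite -val_enum_ord count_map cardE /enum_mem size_filter filter_predT.
by apply: eq_count => x /=; rewrite inE.
Qed.

Definition fv N (f : {ffun 'I_N -> 'I_N}) (y : nat) : nat :=
  if (insub y : option 'I_N) is Some y' then val (f y') else y.
Definition mk N (F : nat -> nat) : {ffun 'I_N -> 'I_N} := [ffun x : 'I_N => insubd x (F x)].

Lemma fvE N (f : {ffun 'I_N -> 'I_N}) (x : 'I_N) : fv f x = f x.
Proof. by rewrite /fv valK. Qed.

Lemma mkE N (F : nat -> nat) (x : 'I_N) : F x < N -> val (mk N F x) = F x.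
Proof. by move=> h; rewrite ffunE val_insubd h. Qed.

Definition Inv N := [set f : {ffun 'I_N -> 'I_N} | [forall x, (f (f x) == x) && (f x != x)]].

Lemma InvP N (f : {ffun 'I_N -> 'I_N}) : f \in Inv N <-> NI N (fv f).
Proof.
split.
- rewrite inE => /forallP H y hy.
  have := H (Ordinal hy) => /andP[/eqP e1 e2].
  have ey : y = val (Ordinal hy) by [].
  rewrite ey !fvE; split; [exact: ltn_ord | by rewrite e1 | ].
  by move=> /val_inj e; move/eqP: e2.
- move=> H; rewrite inE; apply/forallP => x.
  have [h1 h2 h3] := H x (ltn_ord x).
  rewrite !fvE in h2 h3.
  apply/andP; split; first by apply/eqP/val_inj.
  by apply/eqP => e; apply: h3; rewrite e.
Qed.

Lemma fv_out N (f : {ffun 'I_N -> 'I_N}) y : N <= y -> fv f y = y.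
Proof. by move=> h; rewrite /fv insubN // -leqNgt. Qed.

Lemma mkK N F : (forall y, y < N -> F y < N) -> forall y, y < N -> fv (mk N F) y = F y.
Proof.
move=> H y hy; have -> : y = val (Ordinal hy) by [].
by rewrite fvE mkE //; apply: H.
Qed.

Lemma fv_mk_eq N (f g : {ffun 'I_N -> 'I_N}) : (forall y, y < N -> fv f y = fv g y) -> f = g.
Proof.
move=> H; apply/ffunP => x; apply: val_inj; have := H x (ltn_ord x); by rewrite !fvE.
Qed.

Definition shorts N (f : {ffun 'I_N -> 'I_N}) := #|[set x : 'I_N | (f x : nat) == x.+1]|.

Lemma shortsE N (f : {ffun 'I_N -> 'I_N}) : shorts f = cntS N (fv f).
Proof.
rewrite /shorts /cntS -card_ord_count; apply: eq_card => x.
by rewrite !inE fvE.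
Qed.

Lemma NI_ext N F G : (forall y, y < N -> F y = G y) -> NI N F -> NI N G.
Proof.
move=> E H y hy; have [h1 h2 h3] := H y hy.
have e := E y hy; have e' := E (F y) h1; by rewrite -e -e'; split.
Qed.

Lemma cntS_ext N F G : (forall y, y < N -> F y = G y) -> cntS N F = cntS N G.
Proof.
move=> E; apply: eq_in_count => y; rewrite mem_iota => /andP[_ hy] /=.
by rewrite E.
Qed.

Lemma insv_ext N F F' j : j <= N -> (forall y, y < N -> F y = F' y) ->
  forall x, x < N.+2 -> insv F j x = insv F' j x.
Proof.
move=> hj E x hx; rewrite /insv; case: eqP => // x0; case: eqP => // xp.
by rewrite E //; apply: gg_lt => //; apply/eqP.
Qed.

Lemma delF_ext N G G' : (forall x, x < N.+2 -> G x = G' x) -> (G 0).-1 <= N ->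
  forall y, y < N -> delF G y = delF G' y.
Proof.
move=> E hj y hy; have e0 := E 0 (ltac:(done)).
rewrite /delF -e0 (E (hh (G 0).-1 y)) //; exact: hh_lt.
Qed.

Definition Ins N (u : {ffun 'I_N -> 'I_N} * 'I_N.+1) : {ffun 'I_N.+2 -> 'I_N.+2} :=
  mk N.+2 (insv (fv u.1) u.2).
Definition wt N (f : {ffun 'I_N -> 'I_N}) (j : nat) :=
  cntS N (fv f) + (j == 0) - ((0 < j) && (fv f j.-1 == j)).
Definition SS N s := [set u : {ffun 'I_N -> 'I_N} * 'I_N.+1 | (u.1 \in Inv N) && (wt u.1 u.2 == s)].
Definition II N s := #|[set f in Inv N | shorts f == s]|.

Lemma SSP N s u : (u \in SS N s) = (u.1 \in Inv N) && (wt u.1 u.2 == s).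
Proof. by rewrite /SS in_set. Qed.

Lemma Ins_fv N (u : {ffun 'I_N -> 'I_N} * 'I_N.+1) : u.1 \in Inv N ->
  forall x, x < N.+2 -> fv (Ins u) x = insv (fv u.1) u.2 x.
Proof.
move=> /InvP H; apply: mkK => x hx.
have hj : (u.2 : nat) <= N by have := ltn_ord u.2; lia.
by have [] := insv_NI H hj hx.
Qed.

Lemma Ins_Inv N (u : {ffun 'I_N -> 'I_N} * 'I_N.+1) : u.1 \in Inv N -> Ins u \in Inv N.+2.
Proof.
move=> Hu; apply/InvP; apply: (NI_ext (F := insv (fv u.1) u.2)).
  by move=> x hx; rewrite Ins_fv.
apply: insv_NI; first by apply/InvP.
by have := ltn_ord u.2; lia.
Qed.

Lemma Ins_shorts N (u : {ffun 'I_N -> 'I_N} * 'I_N.+1) : u.1 \in Inv N ->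
  shorts (Ins u) = wt u.1 u.2.
Proof.
move=> Hu; rewrite shortsE (@cntS_ext _ _ (insv (fv u.1) u.2)); last first.
  by move=> x hx; rewrite Ins_fv.
rewrite cntS_ins //; first by apply/InvP.
by have := ltn_ord u.2; lia.
Qed.

Lemma Ins_inj N s : {in SS N s &, injective (@Ins N)}.
Proof.
move=> u v; rewrite !SSP => /andP[Hu _] /andP[Hv _] E.
have Eu := Ins_fv Hu; have Ev := Ins_fv Hv.
have hju : (u.2 : nat) <= N by have := ltn_ord u.2; lia.
have hjv : (v.2 : nat) <= N by have := ltn_ord v.2; lia.
have e0 : (u.2 : nat) = v.2.
  have := Eu 0 (ltac:(done)); rewrite E Ev //= /insv /= => e; lia.
have ej : u.2 = v.2 by apply: val_inj.
case: u v Hu Hv Eu Ev hju hjv e0 ej E => f j [g k] /= Hf Hg Eu Ev hju hjv e0 ej E.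
subst k; congr pair; apply: fv_mk_eq => y hy.
have [_ A] := del_insv (fv f) hju.
have [_ B] := del_insv (fv g) hju.
rewrite -A -B; apply: (@delF_ext N) => //.
  by move=> x hx; rewrite -(Eu x hx) E; exact: Ev.
Qed.

Lemma Ins_img N s : [set f in Inv N.+2 | shorts f == s] = (@Ins N) @: SS N s.
Proof.
apply/setP => g; rewrite in_set; apply/andP/imsetP.
- move=> [Hg /eqP Hs].
  have HG := Hg; move/InvP: HG => HG.
  have [hj HF] := del_NI HG.
  set j := ((fv g) 0).-1 in hj HF.
  set F := delF (fv g) in HF.
  have hj' : j < N.+1 by lia.
  set f := mk N F.
  have Ef : forall y, y < N -> fv f y = F y.
    by apply: mkK => y hy; have [] := HF y hy.
  have Hf : f \in Inv N by apply/InvP; apply: (NI_ext (F := F)) => // y hy; rewrite Ef.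
  have Ej : ((inord j : 'I_N.+1) : nat) = j by rewrite inordK.
  have Eg : Ins (f, inord j) = g.
    apply: fv_mk_eq => x hx; rewrite Ins_fv //= Ej.
    rewrite (@insv_ext N (fv f) F) //; exact: (insv_del HG hx).
  exists (f, inord j) => //.
  rewrite SSP /= Hf /= -Hs -Eg Ins_shorts //.
- move=> [u Hu ->]; move: Hu; rewrite SSP => /andP[Hu /eqP Hs].
  by rewrite Ins_Inv // Ins_shorts // Hs.
Qed.

Lemma card_II N s : II N.+2 s = #|SS N s|.
Proof. by rewrite /II Ins_img card_in_imset //; exact: Ins_inj. Qed.

Lemma sum_ind (T : finType) (A : {set T}) (P : pred T) c :
  \sum_(i in A) (P i * c) = #|[set i in A | P i]| * c.
Proof.
rewrite (bigID P) /= [X in _ + X]big1 ?addn0; last by move=> i /andP[_ /negbTE ->].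
rewrite (eq_bigr (fun _ => c)); last by move=> i /andP[_ ->]; rewrite mul1n.
rewrite -sum_nat_const; apply: eq_bigl => i; by rewrite !inE.
Qed.

Lemma card_SS N s : #|SS N s| = \sum_(f in Inv N) #|[set j : 'I_N.+1 | wt f j == s]|.
Proof.
rewrite -sum1_card.
rewrite (eq_bigl (fun u : {ffun 'I_N -> 'I_N} * 'I_N.+1 => (u.1 \in Inv N) && (wt u.1 u.2 == s))); last first.
  by move=> u; rewrite SSP.
rewrite -(pair_big_dep (fun f => f \in Inv N) (fun f (j : 'I_N.+1) => wt f j == s) (fun _ _ => 1)) /=.
apply: eq_bigr => f _; rewrite -sum1_card; apply: eq_bigl => j; by rewrite inE.
Qed.

Lemma count_sub (c : pred nat) t s l :
  count (fun y => t - c y == s) l = (t.-1 == s) * count c l + (t == s) * count (predC c) l.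
Proof.
elim: l => [|y l IH] /=; first lia.
rewrite IH; case: (c y) => /=; rewrite ?subn1 ?subn0; lia.
Qed.

Lemma card_wt N (f : {ffun 'I_N -> 'I_N}) s : f \in Inv N ->
  #|[set j : 'I_N.+1 | wt f j == s]| =
  ((shorts f).+1 == s) + ((shorts f).-1 == s) * shorts f + (shorts f == s) * (N - shorts f).
Proof.
move=> Hf; rewrite (@card_ord_count N.+1 (fun j => wt f j == s)) shortsE.
set t := cntS N (fv f).
have -> : iota 0 N.+1 = 0 :: map (addn 1) (iota 0 N) by rewrite -iotaDl.
rewrite /= count_map.
rewrite (@eq_count _ _ (fun y => t - (fv f y == y.+1) == s)); last first.
  by move=> y; rewrite /= /wt -/t add1n /= addn0.
rewrite count_sub.
have Ec : count (fun y => fv f y == y.+1) (iota 0 N) = t by [].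
have Ed : count (predC (fun y => fv f y == y.+1)) (iota 0 N) = N - t.
  by rewrite -Ec -[X in X - _](size_iota 0 N) -(count_predC (fun y => fv f y == y.+1)) addKn.
rewrite Ec Ed /wt -/t /= subn0 addn1; lia.
Qed.

Lemma rec_II N s :
  II N.+2 s = (0 < s) * II N s.-1 + s.+1 * II N s.+1 + (N - s) * II N s.
Proof.
rewrite card_II card_SS.
rewrite (eq_bigr (fun f => ((shorts f).+1 == s) * 1 + ((shorts f == s.+1) * s.+1) +
          ((shorts f == s) * (N - s)))); last first.
  move=> f Hf; rewrite card_wt //; lia.
rewrite !big_split /= !sum_ind.
congr (_ + _ + _); last by rewrite mulnC.
  case: s => [|s] /=.
    rewrite muln1 mul0n; apply: eq_card0 => f; by rewrite !inE /= andbF.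
  rewrite muln1 mul1n /II; apply: eq_card => f; by rewrite !inE eqSS.
by rewrite mulnC.
Qed.

Section Part.
Variable N : nat.
Implicit Types (f : {ffun 'I_N -> 'I_N}) (P : {set {set 'I_N}}).

Definition cdN P := partition P [set: 'I_N] && [forall B in P, #|B| == 2].
Definition scN (B : {set 'I_N}) := [exists i : 'I_N, exists j : 'I_N,
     (nat_of_ord j == (nat_of_ord i).+1) && (B == [set i; j])].
Definition nsN P := #|[set B in P | scN B]|.
Definition toP f : {set {set 'I_N}} := [set [set x; f x] | x : 'I_N].
Definition toF P : {ffun 'I_N -> 'I_N} :=
  [ffun x => odflt x [pick y in pblock P x | y != x]].

Lemma InvE f : f \in Inv N -> forall x, f (f x) = x /\ f x != x.
Proof. by rewrite inE => /forallP H x; have /andP[/eqP -> ->] := H x. Qed.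

Lemma blk f : f \in Inv N -> forall x z, z \in [set x; f x] -> [set z; f z] = [set x; f x].
Proof.
move=> Hf x z /set2P[->|->] //.
have [e _] := InvE Hf x; by rewrite e setUC.
Qed.

Lemma toP_cd f : f \in Inv N -> cdN (toP f).
Proof.
move=> Hf; apply/andP; split.
- apply/and3P; split.
  + apply/eqP/setP => x; rewrite inE; apply/bigcupP; exists [set x; f x].
      by apply/imsetP; exists x.
    by rewrite set21.
  + apply/trivIsetP => A B /imsetP[x _ ->] /imsetP[y _ ->] ne.
    apply/pred0P => z /=; apply/negbTE/negP => /andP[zx zy].
    by move/eqP: ne; apply; rewrite -(blk Hf zx) (blk Hf zy).
  + apply/negP => /imsetP[x _] e.
    by have := set21 x (f x); rewrite -e inE.
- apply/forallP => B; apply/implyP => /imsetP[x _ ->].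
  by have [_ ne] := InvE Hf x; rewrite cards2 (eq_sym x) ne.
Qed.

Lemma pblock_toP f x : f \in Inv N -> pblock (toP f) x = [set x; f x].
Proof.
move=> Hf; have /andP[/and3P[_ tI _] _] := toP_cd Hf.
apply: def_pblock => //; first by apply/imsetP; exists x.
by rewrite set21.
Qed.

Lemma toFK f : f \in Inv N -> toF (toP f) = f.
Proof.
move=> Hf; apply/ffunP => x; rewrite ffunE pblock_toP //.
case: pickP => [y /andP[/set2P[->|->] ne]|none] /=.
- by rewrite eqxx in ne.
- by [].
- have [_ ne] := InvE Hf x.
  by have := none (f x); rewrite set22 ne.
Qed.

Lemma toP_ns f : f \in Inv N -> nsN (toP f) = shorts f.
Proof.
move=> Hf; rewrite /nsN /shorts.
have -> : [set B in toP f | scN B] =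
    (fun x => [set x; f x]) @: [set x : 'I_N | (f x : nat) == x.+1].
  apply/setP => B; rewrite inE; apply/andP/imsetP.
  - move=> [/imsetP[x _ ->] /existsP[i /existsP[j /andP[/eqP ji /eqP e]]]].
    have hi : i \in [set x; f x] by rewrite e set21.
    have Ei := blk Hf hi.
    have fij : f i = j.
      have : j \in [set i; f i] by rewrite Ei e set22.
      case/set2P => [jeq|] //; move: ji; rewrite jeq; lia.
    exists i; first by rewrite inE fij ji.
    by rewrite Ei.
  - move=> [x]; rewrite inE => /eqP hx ->; split; first by apply/imsetP; exists x.
    by apply/existsP; exists x; apply/existsP; exists (f x); rewrite hx !eqxx.
rewrite card_in_imset // => x y; rewrite !inE => /eqP hx /eqP hy e.
have : x \in [set y; f y] by rewrite -e set21.
have : y \in [set x; f x] by rewrite e set21.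
case/set2P => [->//|e1]; case/set2P => [->//|e2].
apply: val_inj; move: hx hy; rewrite -e1 -e2; lia.
Qed.

Lemma toF_Inv P : cdN P -> toF P \in Inv N /\ forall x, pblock P x = [set x; toF P x].
Proof.
move=> /andP[/and3P[/eqP cov tI n0] /forallP c2].
have hmem : forall x, x \in pblock P x by move=> x; rewrite mem_pblock cov inE.
have hP : forall x, pblock P x \in P by move=> x; apply: pblock_mem; rewrite cov inE.
have hb : forall x, pblock P x = [set x; toF P x] /\ toF P x != x.
  move=> x; rewrite ffunE; case: pickP => [y /andP[hy ne]|none] /=.
    split => //; apply/eqP; rewrite eq_sym eqEcard; apply/andP; split.
      by apply/subsetP => z /set2P[->|->].
    have := c2 (pblock P x); rewrite hP /= => /eqP ->; by rewrite cards2 eq_sym ne.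
  exfalso; have := c2 (pblock P x); rewrite hP /= => /cards2P [a [b [ab e]]].
  have := hmem x; rewrite e => /set2P[ex|ex].
    by have := none b; rewrite e set22 ex (eq_sym b) ab.
  by have := none a; rewrite e set21 ex ab.
split; last by move=> x; have [] := hb x.
rewrite inE; apply/forallP => x; have [e1 ne] := hb x; rewrite ne andbT.
have [e2 ne2] := hb (toF P x).
have : toF P x \in pblock P x by rewrite e1 set22.
move/(same_pblock tI) => e3.
have : toF P (toF P x) \in [set x; toF P x] by rewrite -e1 -e3 e2 set22.
by case/set2P => [->//|e4]; rewrite e4 eqxx in ne2.
Qed.

Lemma toFP P : cdN P -> toP (toF P) = P.
Proof.
move=> cd; have [HF hb] := toF_Inv cd.
move: cd => /andP[/and3P[/eqP cov tI n0] /forallP c2].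
apply/setP => B; apply/imsetP/idP.
- move=> [x _ ->]; rewrite -hb; apply: pblock_mem; by rewrite cov inE.
- move=> hB; have := c2 B; rewrite hB /= => /cards2P[a [b [_ e]]].
  exists a => //; rewrite -hb; symmetry; apply: def_pblock => //; by rewrite e set21.
Qed.

Lemma selP s f : (f \in [set f in Inv N | shorts f == s]) = (f \in Inv N) && (shorts f == s).
Proof. by rewrite in_set. Qed.

Definition Cnt s := #|[set P : {set {set 'I_N}} | cdN P && (nsN P == s)]|.

Lemma Cnt_II s : Cnt s = II N s.
Proof.
rewrite /Cnt /II.
have -> : [set P : {set {set 'I_N}} | cdN P && (nsN P == s)] =
    toP @: [set f in Inv N | shorts f == s].
  apply/setP => P; rewrite inE; apply/andP/imsetP.
  - move=> [cd /eqP ns]; have [HF _] := toF_Inv cd.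
    exists (toF P); last by rewrite toFP.
    by rewrite inE HF /= -ns -toP_ns // toFP.
  - move=> [f]; rewrite inE => /andP[Hf /eqP hs] ->.
    by rewrite toP_cd // toP_ns // hs.
rewrite card_in_imset // => f g; rewrite !selP => /andP[Hf _] /andP[Hg _] e.
by rewrite -(toFK Hf) e toFK.
Qed.
End Part.


Lemma II0 s : II 0 s = (s == 0).
Proof.
rewrite /II.
have Hf : forall f : {ffun 'I_0 -> 'I_0}, f \in Inv 0 /\ shorts f = 0.
  move=> f; split; first by rewrite inE; apply/forallP => [[]].
  by rewrite /shorts; apply: eq_card0 => [[]].
case: s => [|s] /=.
  rewrite (_ : [set f in Inv 0 | shorts f == 0] = setT); last first.
    by apply/setP => f; rewrite selP in_setT; have [-> ->] := Hf f.
  by rewrite cardsT card_ffun !card_ord.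
by apply: eq_card0 => f; rewrite selP; have [_ ->] := Hf f; rewrite andbF.
Qed.

Lemma L_Cnt n s : L n s = Cnt (2 * n) s.
Proof. by []. Qed.

Lemma Lrec m s : L m.+1 s = (0 < s) * L m s.-1 + s.+1 * L m s.+1 + (2 * m - s) * L m s.
Proof.
rewrite !L_Cnt (_ : 2 * m.+1 = (2 * m).+2); last by lia.
by rewrite !Cnt_II rec_II.
Qed.

Lemma L0 s : L 0 s = (s == 0).
Proof. by rewrite L_Cnt Cnt_II II0. Qed.

Lemma Lvan m s : m < s -> L m s = 0.
Proof.
elim: m s => [|m IH] s hs; first by rewrite L0; case: s hs.
rewrite Lrec !IH; try lia.
Qed.

Open Scope Z_scope.
Notation za m k := (Z.of_nat (L m k)).

Lemma LrecZ0 m : za m.+1 0 = za m 1 + 2 * Z.of_nat m * za m 0.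
Proof. rewrite Lrec ltnn mul0n add0n subn0 mul1n; nia. Qed.

Lemma LrecZ m s : za m.+1 s.+1 =
  za m s + (Z.of_nat s + 2) * za m s.+2 + (2 * Z.of_nat m - Z.of_nat s - 1) * za m s.+1.
Proof.
rewrite Lrec (_ : (0 < s.+1)%nat = true) // mul1n (_ : s.+1.-1 = s) //.
case: (leqP s.+1 (2 * m)) => h.
  nia.
rewrite (Lvan (m := m) (s := s.+1)); last by lia.
rewrite (Lvan (m := m) (s := s.+2)); last by lia.
nia.
Qed.

Lemma comb (S M am1 a0 a1 a2 a3 : Z) :
  S * (S+1) * a1 + S * (2*M-1-S) * a0 + (2*S-2-2*M) * am1 = 0 ->
  (S+1)*(S+2)*a2 + (S+1)*(2*M-2-S)*a1 + (2*S-2*M)*a0 = 0 ->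
  (S+2)*(S+3)*a3 + (S+2)*(2*M-3-S)*a2 + (2*S+2-2*M)*a1 = 0 ->
  (S+1)*(S+2)*(a1 + (S+3)*a3 + (2*M-S-2)*a2) +
  (S+1)*(2*(M+1)-2-S)*(a0 + (S+2)*a2 + (2*M-S-1)*a1) +
  (2*S-2*(M+1))*(am1 + (S+1)*a1 + (2*M-S)*a0) = 0.
Proof.
move=> H1 H2 H3.
have -> : (S+1)*(S+2)*(a1 + (S+3)*a3 + (2*M-S-2)*a2) +
  (S+1)*(2*(M+1)-2-S)*(a0 + (S+2)*a2 + (2*M-S-1)*a1) +
  (2*S-2*(M+1))*(am1 + (S+1)*a1 + (2*M-S)*a0) =
  (S+1) * ((S+2)*(S+3)*a3 + (S+2)*(2*M-3-S)*a2 + (2*S+2-2*M)*a1) +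
  (2*M-S+1) * ((S+1)*(S+2)*a2 + (S+1)*(2*M-2-S)*a1 + (2*S-2*M)*a0) +
  (S * (S+1) * a1 + S * (2*M-1-S) * a0 + (2*S-2-2*M) * am1) by ring.
by rewrite H1 H2 H3; ring.
Qed.

Lemma Eid m s :
  (Z.of_nat s + 1) * (Z.of_nat s + 2) * za m s.+2 +
  (Z.of_nat s + 1) * (2 * Z.of_nat m - 2 - Z.of_nat s) * za m s.+1 +
  (2 * Z.of_nat s - 2 * Z.of_nat m) * za m s = 0.
Proof.
elim: m s => [|m IH] s.
  rewrite !L0; case: s => [|s] /=; lia.
have IH' : forall s, (Z.of_nat s + 1) * (Z.of_nat s + 2) * za m s.+2 +
  (Z.of_nat s + 1) * (2 * Z.of_nat m - 2 - Z.of_nat s) * za m s.+1 +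
  (2 * Z.of_nat s - 2 * Z.of_nat m) * za m s = 0 by exact: IH.
case: s => [|s].
  have := comb (S := 0) (M := Z.of_nat m) (am1 := 0) (a0 := za m 0) (a1 := za m 1)
     (a2 := za m 2) (a3 := za m 3) ltac:(lia) ltac:(have := IH' 0%nat; lia) ltac:(have := IH' 1%nat; lia).
  rewrite LrecZ LrecZ LrecZ0.
  rewrite !Nat2Z.inj_succ; lia.
have := comb (S := Z.of_nat s.+1) (M := Z.of_nat m) (am1 := za m s) (a0 := za m s.+1) (a1 := za m s.+2)
     (a2 := za m s.+3) (a3 := za m s.+4)
     ltac:(have := IH' s; rewrite !Nat2Z.inj_succ; lia)
     ltac:(have := IH' s.+1; rewrite !Nat2Z.inj_succ; lia)
     ltac:(have := IH' s.+2; rewrite !Nat2Z.inj_succ; lia).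
rewrite !LrecZ.
rewrite !Nat2Z.inj_succ; lia.
Qed.

Lemma Aid m : L m.+1 1 = (L m.+1 0 + L m 0)%nat.
Proof.
apply: Nat2Z.inj; rewrite Nat2Z.inj_add LrecZ LrecZ0.
have := Eid m 0; lia.
Qed.

Lemma D1 n : (1 <= n)%nat -> (L n 2 <= L n 1)%nat.
Proof.
case: n => [//|m] _.
have E := Eid m.+1 0; have A := Aid m.
have A' : za m.+1 1 = za m.+1 0 + za m 0 by rewrite A Nat2Z.inj_add.
rewrite Nat2Z.inj_succ in E; nia.
Qed.

Lemma Dall n i : (1 <= i)%nat -> (L n i.+1 <= L n i)%nat.
Proof.
elim: n i => [|n IH] i hi.
  by rewrite L0.
case: i hi => [//|[|i]] _; first by apply: D1.
rewrite !Lrec /=.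
have h1 := IH i.+1 isT; have h2 := IH i.+2 isT; have h3 := IH i.+3 isT.
have p1 : ((i.+4) * L n i.+4 <= (i.+4) * L n i.+3)%nat by rewrite leq_mul2l h3 orbT.
have p2 : ((2 * n - i.+3) * L n i.+3 + L n i.+3 <= (2 * n - i.+2) * L n i.+2)%nat.
  case: (leqP i.+3 (2 * n)) => h.
    have -> : (2 * n - i.+2 = (2 * n - i.+3).+1)%nat by lia.
    have := leq_mul (leqnn (2 * n - i.+3)) h2; lia.
  rewrite (Lvan (m := n) (s := i.+3)); last by lia.
  by rewrite muln0.
lia.
Qed.

Close Scope Z_scope.

Theorem theorem1 (n : nat) (hn : 1 <= n) :
  exists2 m : nat, m <= n &
    (forall i : nat, i < m -> L n i <= L n i.+1) /\
    (forall i : nat, m <= i < n -> L n i.+1 <= L n i).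
Proof.
exists 1%nat => //; split.
- move=> i; rewrite ltnS leqn0 => /eqP ->.
  case: n hn => [//|m] _; rewrite Aid; exact: leq_addr.
- move=> i /andP[hi _]; exact: Dall.
Qed.
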